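(* Let $X$ be a normed space, $U\subseteq X$ open nonempty, $Y$ a Banach space and $k\in\overline{\mathbb{N}}$. Let $\mathcal{W}\subseteq\overline{\mathbb{R}}^U$ be such that for each compact $K\subseteq U$ there exists $f_K\in\mathcal{W}$ with $\inf_{x\in K}|f_K(x)|>0$. Then $C^k_{\mathcal{W}}(U,Y)$ is complete.
   Context: $C^k_{\mathcal W}(U,Y)$: $k$ times continuously Fréchet differentiable $\gamma:U\to Y$ with $\|\gamma\|_{f,j}:=\sup_{x\in U}|f(x)|\,\|D^{(j)}\gamma(x)\|_{op}<\infty$ for all $f\in\mathcal W$, $j\in\mathbb N$, $j\le k$ ($\infty\cdot0=0$), with the locally convex topology generated by these seminorms. $\overline{\mathbb{R}}=\mathbb{R}\cup\{\pm\infty\}$, $\overline{\mathbb N}=\mathbb N\cup\{\infty\}$. *)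

(* Defs.v *)
From HB Require Import structures.
From mathcomp Require Import all_boot all_order all_algebra.
From mathcomp Require Import all_classical all_reals all_analysis.
From Stdlib Require Import ClassicalEpsilon.
Set Implicit Arguments. Unset Strict Implicit. Unset Printing Implicit Defensive.
Import Order.TTheory GRing.Theory Num.Theory.
Import numFieldNormedType.Exports.
Local Open Scope classical_set_scope.
Local Open Scope ring_scope.

(* Extended naturals \bar N = N u {oo}: None stands for oo. *)
Definition extnat := option nat.
Definition le_extnat (j : nat) (k : extnat) : Prop :=
  match k with None => True | Some n => (j <= n)%N end.

Section Defs.
Context {R : realType} {X : normedModType R} {Y : normedModType R}.

(* A j-linear map X^j -> Y is represented as A : (nat -> X) -> Y, reading
   only the arguments h 0, ..., h (j-1). *)

Definition opnorm (j : nat) (A : (nat -> X) -> Y) : \bar R :=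
  ereal_sup [set (`|A h|)%:E | h in [set h : nat -> X | forall i, (i < j)%N -> `|h i| <= 1]].

Definition upd (h : nat -> X) (i : nat) (w : X) : nat -> X :=
  fun l => if l == i then w else h l.

Definition consv (v : X) (h : nat -> X) : nat -> X :=
  fun i => if i is i'.+1 then h i' else v.

Definition bounded_multilinear (j : nat) (A : (nat -> X) -> Y) : Prop :=
  [/\ (forall h h', (forall i, (i < j)%N -> h i = h' i) -> A h = A h'),
      (forall i, (i < j)%N -> forall (h : nat -> X) (a : R) (u v : X),
          A (upd h i (a *: u + v)) = a *: A (upd h i u) + A (upd h i v))
    & (opnorm j A < +oo)%E].

(* D is the family of higher Frechet derivatives of gamma on U up to order k:
   D j x = D^(j) gamma (x), with
   D^(j+1) gamma(x)[v, h_1..h_j] = (D (D^(j) gamma)(x) v)[h_1..h_j]. *)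
Definition is_higher_derivs (U : set X) (k : extnat) (g : X -> Y)
    (D : nat -> X -> (nat -> X) -> Y) : Prop :=
  [/\ (forall x h, U x -> D 0%N x h = g x),
      (forall j x, le_extnat j k -> U x -> bounded_multilinear j (D j x)),
      (forall j x, le_extnat j.+1 k -> U x ->
         forall e : R, 0 < e -> exists2 d : R, 0 < d &
           forall y, U y -> `|y - x| < d ->
             (opnorm j (fun h => (D j y h - D j x h - D j.+1 x (consv (y - x) h))%R)
                <= (e * `|y - x|)%:E)%E)
    &
      (forall j x, le_extnat j k -> U x ->
         forall e : R, 0 < e -> exists2 d : R, 0 < d &
           forall y, U y -> `|y - x| < d ->
             (opnorm j (fun h => (D j y h - D j x h)%R) <= e%:E)%E)].

Definition isCk (U : set X) (k : extnat) (g : X -> Y) : Prop :=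
  exists D, is_higher_derivs U k g D.

(* the (unique on U, since U is open) family of higher derivatives *)
Definition hder (U : set X) (k : extnat) (g : X -> Y) : nat -> X -> (nat -> X) -> Y :=
  epsilon (inhabits (fun _ _ _ => 0)) (is_higher_derivs U k g).

(* ||g||_{f,j} = sup_{x in U} |f x| * ||D^(j) g(x)||_op   (with oo * 0 = 0) *)
Definition wseminorm (U : set X) (k : extnat) (f : X -> \bar R) (j : nat)
    (g : X -> Y) : \bar R :=
  ereal_sup [set (`|f x| * opnorm j (hder U k g j x))%E | x in U].

Definition CkW (U : set X) (k : extnat) (W : set (X -> \bar R)) : set (X -> Y) :=
  [set g | isCk U k g /\
     forall f j, W f -> le_extnat j k -> (wseminorm U k f j g < +oo)%E].

(* Completeness of C^k_W(U,Y) for the locally convex topology generated by the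
   seminorms: every proper Cauchy filter on C^k_W(U,Y) converges in C^k_W(U,Y). *)
Definition CkW_complete (U : set X) (k : extnat) (W : set (X -> \bar R)) : Prop :=
  forall F : set_system (X -> Y), ProperFilter F -> F (CkW U k W) ->
    (forall f j (e : R), W f -> le_extnat j k -> 0 < e ->
       exists2 A, F A & forall g g', A g -> A g' ->
         (wseminorm U k f j (fun x => (g x - g' x)%R) < e%:E)%E) ->
    exists2 g, CkW U k W g &
      forall f j (e : R), W f -> le_extnat j k -> 0 < e ->
        F [set g' | (wseminorm U k f j (fun x => (g' x - g x)%R) < e%:E)%E].

End Defs.

(* Main.v *)
Require Import Defs.
From HB Require Import structures.
From mathcomp Require Import all_boot all_order all_algebra.
From mathcomp Require Import all_classical all_reals all_analysis.
From Stdlib Require Import ClassicalEpsilon.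
From mathcomp Require Import ring lra.
Import Order.TTheory GRing.Theory Num.Theory.
Import numFieldNormedType.Exports.
Local Open Scope classical_set_scope.
Local Open Scope ring_scope.
Set Implicit Arguments. Unset Strict Implicit. Unset Printing Implicit Defensive.

Section Opnorm.
Variables (R : realType) (X Y : normedModType R).
Implicit Types (A B : (nat -> X) -> Y) (h : nat -> X).

Definition inball (j : nat) h := forall i, (i < j)%N -> `|h i| <= 1.

Lemma opnorm_ub j A h : inball j h -> (`|A h|%:E <= opnorm j A)%E.
Proof. by move=> hb; apply: ereal_sup_ubound; exists h. Qed.

Lemma opnorm_le j A (c : \bar R) :
  (forall h, inball j h -> (`|A h|%:E <= c)%E) -> (opnorm j A <= c)%E.
Proof. by move=> H; apply/ereal_supP => _ [h hb <-]; exact: H. Qed.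

Lemma opnorm_ge0 j A : (0 <= opnorm j A)%E.
Proof.
apply: le_trans (@opnorm_ub j A (fun _ => 0) _) => //.
by move=> i _; rewrite normr0.
Qed.

Lemma opnorm_fin j A : (opnorm j A < +oo)%E -> opnorm j A \is a fin_num.
Proof. by move=> H; rewrite ge0_fin_numE // opnorm_ge0. Qed.

Lemma opnorm_bound j A h : (opnorm j A < +oo)%E -> inball j h ->
  `|A h| <= fine (opnorm j A).
Proof.
by move=> H hb; rewrite -lee_fin fineK ?opnorm_fin //; exact: opnorm_ub.
Qed.

Lemma fine_opnorm_ge0 j A : 0 <= fine (opnorm j A).
Proof. exact/fine_ge0/opnorm_ge0. Qed.

Lemma upd_id h i : upd h i (h i) = h.
Proof. by apply/funext => l; rewrite /upd; case: eqP => // ->. Qed.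

Lemma upd_upd h i u v : upd (upd h i u) i v = upd h i v.
Proof. by apply/funext => l; rewrite /upd; case: eqP. Qed.

Lemma upd_ne h i u l : l != i -> upd h i u l = h l.
Proof. by rewrite /upd => /negbTE ->. Qed.

Lemma upd_eq h i u : upd h i u i = u.
Proof. by rewrite /upd eqxx. Qed.

Lemma upd_consv v h w : upd (consv v h) 0 w = consv w h.
Proof. by apply/funext => -[|l]. Qed.

Lemma bml_upd0 j A h i : bounded_multilinear j A -> (i < j)%N ->
  A (upd h i 0) = 0.
Proof.
case=> _ lin _ ij; have := lin i ij h 1 0 0; rewrite !scale1r addr0.
by move=> E; apply/(@addrI _ (A (upd h i 0))); rewrite addr0 -E.
Qed.

Lemma bml_scale j A h i a u : bounded_multilinear j A -> (i < j)%N ->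
  A (upd h i (a *: u)) = a *: A (upd h i u).
Proof.
move=> bA ij; have [_ lin _] := bA; have := lin i ij h a u 0.
by rewrite addr0 (bml_upd0 h bA ij) addr0.
Qed.

Lemma bml_prod j A h : bounded_multilinear j A ->
  `|A h| <= fine (opnorm j A) * \prod_(i < j) `|h i|.
Proof.
move=> bA; have [_ _ fA] := bA.
suff H : forall m, (m <= j)%N -> forall h, (forall i, (m <= i < j)%N -> `|h i| <= 1) ->
  `|A h| <= fine (opnorm j A) * \prod_(i < m) `|h i|.
  apply: H => // i /andP[ji ij]; by rewrite ltnNge ji in ij.
elim=> [_ h1 hb|m IH mj h1 hb].
  rewrite big_ord0 mulr1; apply: opnorm_bound => // i ij; exact: hb.
have mj' : (m < j)%N by [].
have [h0|hn0] := eqVneq (h1 m) 0.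
  rewrite -(upd_id h1 m) h0 (bml_upd0 h1 bA mj') normr0.
  by apply: mulr_ge0; [exact: fine_opnorm_ge0|apply: prodr_ge0 => i _].
set a := `|h1 m|; have a0 : 0 < a by rewrite normr_gt0.
set u := a^-1 *: h1 m; set h' := upd h1 m u.
have Eh : h1 = upd h' m (a *: u).
  by rewrite /h' upd_upd /u scalerA divff ?gt_eqF // scale1r upd_id.
have : A h1 = a *: A h' by rewrite {1}Eh (bml_scale h' a u bA mj') /h' upd_upd.
move=> ->; rewrite normrZ (ger0_norm (ltW a0)) big_ord_recr /=.
have -> : \prod_(i < m) `|h1 (widen_ord (leqnSn m) i)| = \prod_(i < m) `|h' i|.
  apply: eq_bigr => i _; rewrite /h' upd_ne //= neq_ltn ltn_ord //.
rewrite [_ * `|h1 m|]mulrC mulrA [fine _ * a]mulrC -mulrA; apply: ler_wpM2l; first exact: ltW.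
apply: IH; first exact: ltnW.
move=> i /andP[mi ij]; have [->|ne] := eqVneq i m.
  rewrite /h' upd_eq /u normrZ normrV ?unitfE ?gt_eqF // normr_id.
  by rewrite mulVf // gt_eqF.
rewrite /h' upd_ne //; apply: hb; rewrite ij andbT ltn_neqAle eq_sym ne mi //.
Qed.

Lemma bml_zero j A h : bounded_multilinear j A ->
  (forall h, inball j h -> A h = 0) -> A h = 0.
Proof.
move=> bA H; apply/normr0_eq0/eqP; rewrite eq_le normr_ge0 andbT.
apply: le_trans (bml_prod h bA) _.
have -> : opnorm j A = 0%E.
  apply/eqP; rewrite eq_le opnorm_ge0 andbT; apply: opnorm_le => h' /H ->.
  by rewrite normr0.
by rewrite mul0r.
Qed.


Lemma opnorm_suble j A B :
  (opnorm j (fun h => (A h - B h)%R) <= opnorm j A + opnorm j B)%E.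
Proof.
apply: opnorm_le => h hb; apply: le_trans (_ : ((`|A h| + `|B h|)%R)%:E <= _)%E.
  by rewrite lee_fin ler_normB.
by rewrite EFinD leeD // opnorm_ub.
Qed.

Lemma opnorm_addle j A B :
  (opnorm j (fun h => (A h + B h)%R) <= opnorm j A + opnorm j B)%E.
Proof.
apply: opnorm_le => h hb; apply: le_trans (_ : ((`|A h| + `|B h|)%R)%:E <= _)%E.
  by rewrite lee_fin ler_normD.
by rewrite EFinD leeD // opnorm_ub.
Qed.

Lemma bml_sub j A B : bounded_multilinear j A -> bounded_multilinear j B ->
  bounded_multilinear j (fun h => A h - B h).
Proof.
move=> [eA lA fA] [eB lB fB]; split.
- by move=> h h' hh; rewrite (eA h h') // (eB h h').
- move=> i ij h a u v; rewrite lA // lB //.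
  by rewrite scalerBr opprD addrACA.
- apply: le_lt_trans (opnorm_suble _ _ _) _.
  by rewrite -(fineK (opnorm_fin fA)) -(fineK (opnorm_fin fB)) -EFinD ltry.
Qed.

Lemma bml_consv0 j A h : bounded_multilinear j.+1 A -> A (consv 0 h) = 0.
Proof. by move=> bA; rewrite -(upd_consv 0 h 0) (bml_upd0 _ bA). Qed.

Lemma bml_consvZ j A a v h : bounded_multilinear j.+1 A ->
  A (consv (a *: v) h) = a *: A (consv v h).
Proof.
by move=> bA; rewrite -(upd_consv v h (a *: v)) (bml_scale _ _ _ bA) // upd_consv.
Qed.

Lemma inball_consv j v h : `|v| <= 1 -> inball j h -> inball j.+1 (consv v h).
Proof. by move=> v1 hb [|i] //= ij; apply: hb. Qed.

Lemma consv_bound j A (c : R) v h : bounded_multilinear j.+1 A ->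
  (forall h', inball j.+1 h' -> `|A h'| <= c) -> inball j h ->
  `|A (consv v h)| <= c * `|v|.
Proof.
move=> bA H hb; have [->|vn0] := eqVneq v 0.
  by rewrite (bml_consv0 _ bA) !normr0 mulr0.
have v0 : 0 < `|v| by rewrite normr_gt0.
have -> : A (consv v h) = `|v| *: A (consv (`|v|^-1 *: v) h).
  by rewrite -(bml_consvZ _ _ _ bA) scalerA divff ?gt_eqF // scale1r.
rewrite normrZ normr_id mulrC; apply: ler_wpM2r; first exact: ltW.
apply: H; apply: inball_consv => //.
by rewrite normrZ normrV ?unitfE ?gt_eqF // normr_id mulVf // gt_eqF.
Qed.

Lemma opnorm_weight j A (a B : \bar R) : (0 <= a)%E ->
  (forall h, inball j h -> (a * (`|A h|)%:E <= B)%E) -> (a * opnorm j A <= B)%E.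
Proof.
move=> a0 H.
have B0 : (0 <= B)%E.
  apply: le_trans (H (fun _ => 0) _); first by apply: mule_ge0 => //; rewrite lee_fin.
  by move=> i _; rewrite normr0 ler01.
case: B B0 H => [b b0 H|_ _|//]; last by rewrite leey.
case: a a0 H => [r r0 H|_ H|//].
- rewrite lee_fin in r0; have [->|rn0] := eqVneq r 0; first by rewrite mul0e.
  have rp : 0 < r by rewrite lt_neqAle eq_sym rn0 r0.
  have : (opnorm j A <= (r^-1 * b)%:E)%E.
    apply: opnorm_le => h hb; rewrite lee_fin ler_pdivlMl // -lee_fin EFinM.
    exact: H.
  have r0' : (0 <= r%:E)%E by rewrite lee_fin.
  move/(lee_wpmul2l r0') => /le_trans; apply.
  by rewrite -EFinM mulrA divff ?gt_eqF // mul1r.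
- have -> : opnorm j A = 0%E.
    apply/eqP; rewrite eq_le opnorm_ge0 andbT; apply: opnorm_le => h hb.
    rewrite lee_fin leNgt; apply/negP => p; have := H h hb.
    by rewrite gt0_mulye ?lte_fin // leye_eq.
  by rewrite mule0.
Qed.

End Opnorm.

Lemma sub3 (V : zmodType) (a1 a2 b1 b2 c1 c2 : V) :
  a1 - a2 - (b1 - b2) - (c1 - c2) = (a1 - b1 - c1) - (a2 - b2 - c2).
Proof. by rewrite !opprD [RHS]addrACA [X in _ = X + _]addrACA. Qed.
Lemma add3 (V : zmodType) (a1 a2 b1 b2 : V) :
  a1 - a2 - (b1 - b2) = (a1 - b1) - (a2 - b2).
Proof. by rewrite !opprD addrACA. Qed.

Lemma tri (V : zmodType) (a b c d : V) : c - d = (a - b) - (a - c) + (b - d).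
Proof. by rewrite (add3 a b a c) subrr sub0r opprB addrA subrK. Qed.

Lemma tri2 (V : zmodType) (a b c d e : V) : c - d - e = (a - e - b) - (a - c) + (b - d).
Proof.
rewrite addrAC (tri (a - e) b (c - e) d); congr (_ - _ + _).
by rewrite opprB addrA subrK.
Qed.

Lemma phi_id (R : ringType) (V : lmodType R) (A B Q c : V) (s t : R) :
  (A - s *: c) - (B - t *: c) = (A - B - (s - t) *: Q) + (s - t) *: (Q - c).
Proof. by rewrite scalerBr addrA subrK add3 scalerBl. Qed.

Lemma le_extnatS j k : le_extnat j.+1 k -> le_extnat j k.
Proof. by case: k => //= n /ltnW. Qed.

Section Families.
Variables (R : realType) (X Y : normedModType R).

Lemma ihd_sub (U : set X) k (g1 g2 : X -> Y) D1 D2 :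
  is_higher_derivs U k g1 D1 -> is_higher_derivs U k g2 D2 ->
  is_higher_derivs U k (fun x => g1 x - g2 x) (fun j x h => D1 j x h - D2 j x h).
Proof.
move=> [a1 b1 c1 d1] [a2 b2 c2 d2]; split.
- by move=> x h Ux; rewrite a1 // a2.
- by move=> j x jk Ux; apply: bml_sub; [exact: b1|exact: b2].
- move=> j x jk Ux e e0.
  have e2 : 0 < e / 2 by rewrite divr_gt0.
  have [r1 r10 H1] := c1 j x jk Ux _ e2; have [r2 r20 H2] := c2 j x jk Ux _ e2.
  exists (Num.min r1 r2); first by rewrite lt_min r10.
  move=> y Uy; rewrite lt_min => /andP[y1 y2].
  rewrite (_ : (fun h => _) = (fun h => (D1 j y h - D1 j x h - D1 j.+1 x (consv (y - x) h)) - (D2 j y h - D2 j x h - D2 j.+1 x (consv (y - x) h)))); last first.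
    by apply/funext => h; rewrite sub3.
  apply: le_trans (opnorm_suble _ _ _) _.
  by rewrite [e in (e * _)%:E](splitr e) mulrDl EFinD; apply: leeD; [exact: H1|exact: H2].
- move=> j x jk Ux e e0.
  have e2 : 0 < e / 2 by rewrite divr_gt0.
  have [r1 r10 H1] := d1 j x jk Ux _ e2; have [r2 r20 H2] := d2 j x jk Ux _ e2.
  exists (Num.min r1 r2); first by rewrite lt_min r10.
  move=> y Uy; rewrite lt_min => /andP[y1 y2].
  rewrite (_ : (fun h => _) = (fun h => (D1 j y h - D1 j x h) - (D2 j y h - D2 j x h))); last first.
    by apply/funext => h; rewrite add3.
  apply: le_trans (opnorm_suble _ _ _) _.
  by rewrite [e in e%:E](splitr e) EFinD; apply: leeD; [exact: H1|exact: H2].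
Qed.

Lemma ihd_uniq (U : set X) k (g : X -> Y) D1 D2 : open U ->
  is_higher_derivs U k g D1 -> is_higher_derivs U k g D2 ->
  forall j, le_extnat j k -> forall x, U x -> forall h, D1 j x h = D2 j x h.
Proof.
move=> Uo [a1 b1 c1 _] [a2 b2 c2 _]; elim=> [_ x Ux h|j IH jk x Ux h].
  by rewrite a1 // a2.
have jk' := le_extnatS jk.
pose Dl := fun h => D1 j.+1 x h - D2 j.+1 x h.
have bD : bounded_multilinear j.+1 Dl := bml_sub (b1 _ _ jk Ux) (b2 _ _ jk Ux).
apply/eqP; rewrite -subr_eq0; apply/eqP; change (Dl h = 0).
apply: (bml_zero _ bD) => h' hb'.
have -> : h' = consv (h' 0%N) (fun i => h' i.+1) by apply/funext => -[].
set v := h' 0%N; set hh := fun i => h' i.+1.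
have hb : inball j hh by move=> i ij; exact: hb'.
apply/normr0_eq0/eqP; rewrite eq_le normr_ge0 andbT.
apply/ler_addgt0Pr => eps eps0; rewrite add0r.
have [->|vn0] := eqVneq v 0; first by rewrite (bml_consv0 _ bD) normr0 ltW.
have v0 : 0 < `|v| by rewrite normr_gt0.
have [r0 r00 rU] : exists2 r, 0 < r & ball x r `<=` U by move: Uo; rewrite openE => /(_ x Ux) /nbhs_ballP.
pose e' := eps / (2 * (`|v| + 1)).
have e'0 : 0 < e' by rewrite divr_gt0 // mulr_gt0 // ltr_wpDl.
have [d1 d10 H1] := c1 j x jk Ux e' e'0; have [d2 d20 H2] := c2 j x jk Ux e' e'0.
pose d := Num.min r0 (Num.min d1 d2).
have d0 : 0 < d by rewrite !lt_min r00 d10 d20.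
pose s := d / (2 * `|v|).
have s0 : 0 < s by rewrite divr_gt0 // mulr_gt0.
pose y := x + s *: v.
have yx : y - x = s *: v by rewrite /y addrAC subrr add0r.
have nyx : `|y - x| = d / 2.
  rewrite yx normrZ gtr0_norm // /s; field; exact: lt0r_neq0.
have yd : `|y - x| < d by rewrite nyx ltr_pdivrMr // ltr_pMr // ltr1n.
have Uy : U y.
  apply: rU; rewrite -ball_normE /= distrC.
  by apply: lt_le_trans yd _; rewrite ge_min lexx.
have yd1 : `|y - x| < d1 by apply: lt_le_trans yd _; rewrite !ge_min lexx orbT.
have yd2 : `|y - x| < d2 by apply: lt_le_trans yd _; rewrite !ge_min lexx !orbT.
have K1 := le_trans (opnorm_ub _ hb) (H1 y Uy yd1).
have K2 := le_trans (opnorm_ub _ hb) (H2 y Uy yd2).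
rewrite lee_fin in K1; rewrite lee_fin in K2.
have : `|Dl (consv (y - x) hh)| <= 2 * e' * `|y - x|.
  rewrite /Dl.
  have -> : D1 j.+1 x (consv (y - x) hh) - D2 j.+1 x (consv (y - x) hh) =
    (D2 j y hh - D2 j x hh - D2 j.+1 x (consv (y - x) hh)) -
    (D1 j y hh - D1 j x hh - D1 j.+1 x (consv (y - x) hh)).
    by rewrite (IH jk' y Uy hh) (IH jk' x Ux hh) [in RHS]opprB [RHS]addrC [RHS]addrA subrK.
  apply: le_trans (ler_normB _ _) _.
  by rewrite -mulrA mulr2n mulrDl mul1r addrC lerD.
rewrite yx (bml_consvZ _ _ _ bD) normrZ gtr0_norm // normrZ gtr0_norm // mulrCA ler_pM2l // => H.
apply: le_trans H _.
have w0 : 0 < `|v| + 1 by rewrite ltr_wpDl.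
have -> : 2 * e' * `|v| = eps * (`|v| / (`|v| + 1)).
  by rewrite /e'; field; exact: lt0r_neq0.
apply: ler_piMr; first exact: ltW.
by rewrite ler_pdivrMr // mul1r lerDl.
Qed.

End Families.

Section MVI.
Variables (R : realType) (Y : normedModType R).

Lemma mvi (phi : R -> Y) (M : R) :
  (forall t, 0 <= t <= 1 -> forall e, 0 < e -> exists2 d, 0 < d &
     forall s, 0 <= s <= 1 -> `|s - t| < d -> `|phi s - phi t| <= (M + e) * `|s - t|) ->
  `|phi 1 - phi 0| <= M.
Proof.
move=> H; apply/ler_addgt0Pr => e e0; set M' := M + e.
pose S := [set t : R | 0 <= t <= 1 /\ forall s, 0 <= s <= t -> `|phi s - phi 0| <= M' * s].
have S0 : S 0.
  split; first by rewrite lexx ler01.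
  move=> s /andP[s0 s0']; have -> : s = 0 by apply/eqP; rewrite eq_le s0 s0'.
  by rewrite subrr normr0 mulr0.
have hS : has_sup S.
  by split; [exists 0 | exists 1 => t [/andP[_ ->]]].
set c := sup S.
have c0 : 0 <= c by apply: sup_upper_bound.
have c1 : c <= 1 by apply: ge_sup; [exists 0 | move=> t [/andP[_ ->]]].
have Hlt : forall s, 0 <= s -> s < c -> `|phi s - phi 0| <= M' * s.
  move=> s s0 sc; have cs0 : 0 < c - s by rewrite subr_gt0.
  have [t [_ Ht] lt] := sup_adherent cs0 hS.
  apply: Ht; rewrite s0 /=; move: lt; rewrite /c opprB addrCA subrr addr0.
  exact: ltW.
have Hc : `|phi c - phi 0| <= M' * c.
  have [->|cpos] := eqVneq c 0; first by rewrite subrr normr0 mulr0.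
  have cp : 0 < c by rewrite lt_neqAle eq_sym cpos c0.
  have [d d0 Hd] := H c (introT andP (conj c0 c1)) e e0.
  have ep : 0 < Num.min c (d / 2) by rewrite lt_min cp divr_gt0.
  have [t [/andP[t0 t1] Ht] lt] := sup_adherent ep hS.
  have tc : t <= c by apply: sup_upper_bound => //; split; [rewrite t0 t1|].
  have ctd : `|t - c| < d.
    rewrite distrC ger0_norm ?subr_ge0 //.
    have : c - t < Num.min c (d / 2) by rewrite ltrBlDr addrC -ltrBlDr.
    move/lt_le_trans; apply; rewrite ge_min; apply/orP; right.
    by rewrite ler_pdivrMr // ler_pMr // ler1n.
  have K1 := Hd t (introT andP (conj t0 t1)) ctd.
  have K2 := Ht t (introT andP (conj t0 (lexx t))).
  apply: le_trans (ler_distD (phi t) _ _) _.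
  rewrite (distrC (phi t)) (distrC t) ger0_norm ?subr_ge0 // in K1.
  have -> : M' * c = (M + e) * (c - t) + M' * t by rewrite /M'; ring.
  exact: lerD.
have Hall : forall s, 0 <= s <= c -> `|phi s - phi 0| <= M' * s.
  move=> s /andP[s0]; rewrite le_eqVlt => /orP[/eqP ->|]; first exact: Hc.
  exact: Hlt.
have cE : c = 1.
  apply/eqP; rewrite eq_le c1 /=; rewrite leNgt; apply/negP => cl1.
  have [d d0 Hd] := H c (introT andP (conj c0 c1)) e e0.
  pose t := Num.min 1 (c + d / 2).
  have ct : c < t by rewrite lt_min cl1 ltrDl divr_gt0.
  have St : S t.
    split; first by rewrite (le_trans c0 (ltW ct)) ge_min lexx.
    move=> s /andP[s0 st]; have [sc|cs] := leP s c; first by apply: Hall; rewrite s0.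
    have csd : `|s - c| < d.
      rewrite ger0_norm ?subr_ge0 ?(ltW cs) // ltrBlDl.
      apply: le_lt_trans st _; rewrite gt_min; apply/orP; right.
      by rewrite ltrD2l ltr_pdivrMr // ltr_pMr // ltr1n.
    have s1 : s <= 1 by apply: le_trans st _; rewrite ge_min lexx.
    have K1 := Hd s (introT andP (conj s0 s1)) csd.
    rewrite ger0_norm ?subr_ge0 ?(ltW cs) // in K1.
    apply: le_trans (ler_distD (phi c) _ _) _.
    have -> : M' * s = (M + e) * (s - c) + M' * c by rewrite /M'; ring.
    exact: lerD.
  have : t <= c by apply: sup_upper_bound.
  by rewrite leNgt ct.
have := Hall 1; rewrite -cE lexx c0 => /(_ isT); by rewrite cE mulr1.
Qed.


End MVI.

Section SeqCompact.
Variables (R : realType) (X : normedModType R).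

Lemma seq_compact (x : X) (y : nat -> X) :
  (forall n, `|x - y n| < n.+1%:R^-1) -> compact (x |` range y).
Proof.
move=> Hy F PF FK.
have [cx|ncx] := pselect (cluster F x); first by exists x; split => //; left.
have [A [B [FA nB AB]]] : exists A B, [/\ F A, nbhs x B & A `&` B = set0].
  apply: contra_notP ncx => H C D FC nD; apply/set0P/negP => /eqP CD.
  by apply: H; exists C, D.
have [r r0 rB] : exists2 r, 0 < r & ball x r `<=` B by move/nbhs_ballP : nB.
have [N _ HN] := near_infty_natSinv_lt (PosNum r0).
pose Fin := y @` [set n | (n < N)%N].
have FFin : F Fin.
  apply: filterS (filterI FK FA) => z [[->|[n _ <-]] Az].
    have : (A `&` B) x by split => //; apply: rB; exact: ballxx.
    by rewrite AB.
  exists n => //=; rewrite ltnNge; apply/negP => Nn.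
  have : (A `&` B) (y n).
    split => //; apply: rB; rewrite -ball_normE /=.
    apply: lt_trans (Hy n) _; exact: HN.
  by rewrite AB.
have Fcomp : compact Fin.
  apply: finite_compact; apply: finite_image.
  exact: finite_II.
have [z [[n _ <-] cz]] := Fcomp F PF FFin.
by exists (y n); split => //; right; exists n.
Qed.
End SeqCompact.

Section Lim.
Variables (R : realType) (Y : normedModType R) (T : Type) (G : set_system T).
Context {PG : ProperFilter G}.

Lemma lim_le_near (E : T -> Y) (L z : Y) (e : R) : E @ G --> L ->
  (\forall t \near G, `|z - E t| <= e) -> `|z - L| <= e.
Proof.
move=> /cvgrPdist_lt HL He; apply/ler_addgt0Pr => eta eta0.
have [t [H1 H2]] := filter_ex (filterI (HL _ eta0) He).
apply: le_trans (ler_distD (E t) _ _) _; apply: lerD => //.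
by rewrite distrC ltW.
Qed.

Lemma lim_eq_near (E1 E2 : T -> Y) (L1 L2 : Y) : E1 @ G --> L1 -> E2 @ G --> L2 ->
  (\forall t \near G, E1 t = E2 t) -> L1 = L2.
Proof.
move=> H1 H2 HE; apply/eqP; rewrite -subr_eq0 -normr_le0.
apply/ler_addgt0Pr => eta eta0; rewrite add0r.
apply: (lim_le_near H2); move/cvgrPdist_lt : H1 => /(_ _ eta0) H1.
by apply: filterS (filterI HE H1) => t [<- /ltW].
Qed.

Lemma lim_lin (E1 E2 E3 : T -> Y) (L1 L2 L3 : Y) (a : R) :
  E1 @ G --> L1 -> E2 @ G --> L2 -> E3 @ G --> L3 ->
  (\forall t \near G, E3 t = a *: E1 t + E2 t) -> L3 = a *: L1 + L2.
Proof.
move=> H1 H2 H3 HE.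
have H4 : (fun t => a *: E1 t + E2 t) @ G --> a *: L1 + L2.
  by apply: cvgD => //; apply: cvgZ => //; exact: cvg_cst.
exact: (lim_eq_near H3 H4).
Qed.

Lemma lim_le_weight (a : \bar R) (E : T -> Y) (L z : Y) (c : R) : (0 <= a)%E ->
  E @ G --> L -> (\forall t \near G, (a * (`|z - E t|)%:E <= c%:E)%E) ->
  (a * (`|z - L|)%:E <= c%:E)%E.
Proof.
move=> a0 HL H.
have c0 : 0 <= c.
  have [t Ht] := filter_ex H; rewrite -lee_fin; apply: le_trans Ht.
  exact: mule_ge0.
case: a a0 H => [r r0 H|_ H|//].
- rewrite -EFinM lee_fin; rewrite lee_fin in r0.
  have [->|rp] := eqVneq r 0; first by rewrite mul0r.
  have rp' : 0 < r by rewrite lt_neqAle eq_sym rp r0.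
  rewrite -ler_pdivlMl //; have K := (@lim_le_near E L z (r^-1 * c) HL); apply: le_trans (K _) _ => //.
  by apply: filterS H => t; rewrite -EFinM lee_fin -ler_pdivlMl.
- suff -> : `|z - L| = 0 by rewrite mule0 lee_fin.
  apply/eqP; rewrite eq_le normr_ge0 andbT.
  apply: (@lim_le_near E L z 0 HL); apply: filterS H => t Ht.
  rewrite leNgt; apply/negP => p; move: Ht; rewrite gt0_mulye ?lte_fin //.
Qed.

End Lim.

Section Main.
Variables (R : realType) (X : normedModType R) (Y : completeNormedModType R).
Variables (U : set X) (k : extnat) (W : set (X -> \bar R)).
Hypothesis Uo : open U.
Hypothesis hW : forall K : set X, compact K -> K `<=` U ->
     exists2 fK, W fK & (0 < ereal_inf [set `|fK x|%E | x in K])%E.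
Variables (F : set_system (X -> Y)) (PF : ProperFilter F).
Hypothesis FC : F (CkW U k W).
Hypothesis HC : forall f j (e : R), W f -> le_extnat j k -> 0 < e ->
       exists2 A, F A & forall g g', A g -> A g' ->
         (wseminorm U k f j (fun x => (g x - g' x)%R) < e%:E)%E.

Local Notation hd g := (hder U k g).

Lemma hder_spec (g : X -> Y) : isCk U k g -> is_higher_derivs U k g (hd g).
Proof. by move=> [D HD]; apply: epsilon_spec; exists D. Qed.

Lemma hd_bml (g : X -> Y) j x : isCk U k g -> le_extnat j k -> U x ->
  bounded_multilinear j (hd g j x).
Proof. by move=> /hder_spec [_ b _ _]; apply: b. Qed.

Lemma isCk_sub (g1 g2 : X -> Y) : isCk U k g1 -> isCk U k g2 ->
  isCk U k (fun x => g1 x - g2 x).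
Proof. by move=> [D1 H1] [D2 H2]; eexists; exact: ihd_sub H1 H2. Qed.

Lemma hder_sub (g1 g2 : X -> Y) D2 : isCk U k g1 -> is_higher_derivs U k g2 D2 ->
  forall j x h, le_extnat j k -> U x ->
  hd (fun x => g1 x - g2 x) j x h = hd g1 j x h - D2 j x h.
Proof.
move=> c1 H2 j x h jk Ux.
have c2 : isCk U k g2 by exists D2.
exact: (ihd_uniq Uo (hder_spec (isCk_sub c1 c2)) (ihd_sub (hder_spec c1) H2) jk Ux).
Qed.

Lemma sem_bound f j (g1 g2 : X -> Y) x h : isCk U k g1 -> isCk U k g2 ->
  le_extnat j k -> U x -> inball j h ->
  (`|f x| * (`|hd g1 j x h - hd g2 j x h|)%:E <=
     wseminorm U k f j (fun x => (g1 x - g2 x)%R))%E.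
Proof.
move=> c1 c2 jk Ux hb.
rewrite -(hder_sub c1 (hder_spec c2) h jk Ux).
apply: le_trans (ereal_sup_ubound _); last by exists x.
by apply: lee_wpmul2l => //; exact: opnorm_ub.
Qed.

Lemma pos_lb K : compact K -> K `<=` U -> exists2 fK, W fK &
  exists2 c : R, 0 < c & forall x, K x -> (c%:E <= `|fK x|)%E.
Proof.
move=> cK KU; have [fK WfK inf0] := hW cK KU; exists fK => //.
move: inf0; set m := ereal_inf _ => m0.
have lb : forall x, K x -> (m <= `|fK x|)%E.
  by move=> x Kx; apply: ereal_inf_lbound; exists x.
case: m m0 lb => [r r0 lb|_ lb|//].
- by exists r; [rewrite -lte_fin | ].
- exists 1 => // x /lb; apply: le_trans; exact: leey.
Qed.

Lemma UCauchy K j e : compact K -> K `<=` U -> le_extnat j k -> 0 < e ->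
  exists2 A, F A & forall g1 g2, A g1 -> A g2 -> CkW U k W g1 /\
    forall x, K x -> forall h, inball j h -> `|hd g1 j x h - hd g2 j x h| < e.
Proof.
move=> cK KU jk e0; have [fK WfK [c c0 Hc]] := pos_lb cK KU.
have [A0 FA0 HA0] := HC WfK jk (mulr_gt0 c0 e0).
exists (A0 `&` CkW U k W); first exact: filterI.
move=> g1 g2 [A1 C1] [A2 C2]; split => // x Kx h hb.
have := sem_bound fK C1.1 C2.1 jk (KU _ Kx) hb.
move/le_lt_trans => /(_ _ (HA0 _ _ A1 A2)).
have n0 : (0 <= (`|hd g1 j x h - hd g2 j x h|)%:E)%E by rewrite lee_fin normr_ge0.
move/(le_lt_trans (lee_wpmul2r n0 (Hc _ Kx))).
by rewrite -EFinM lte_fin ltr_pM2l.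
Qed.

Lemma set1_subU x : U x -> [set x] `<=` U.
Proof. by move=> Ux y ->. Qed.

Lemma Dcvg j x h : le_extnat j k -> U x -> cvg ((fun g => hd g j x h) @ F).
Proof.
move=> jk Ux; apply: cauchy_cvg; apply: cauchy_exP => eps eps0.
set P := \prod_(i < j) `|h i|.
have P0 : 0 <= P by apply: prodr_ge0.
have ep : 0 < eps / (P + 1) by rewrite divr_gt0 // ltr_wpDl.
have [A FA HA] := UCauchy (@compact_set1 X x) (set1_subU Ux) jk ep.
have [g0 Ag0] := filter_ex FA.
exists (hd g0 j x h); apply: (@filterS _ _ _ A [set g | ball (hd g0 j x h) eps (hd g j x h)]) => // g Ag /=.
rewrite -ball_normE /=.
have [C0 H0] := HA _ _ Ag0 Ag; have [Cg _] := HA _ _ Ag Ag0.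
have bD := bml_sub (hd_bml C0.1 jk Ux) (hd_bml Cg.1 jk Ux).
apply: le_lt_trans (bml_prod h bD) _.
apply: (@le_lt_trans _ _ (eps / (P + 1) * P)).
  apply: ler_wpM2r => //.
  rewrite -lee_fin fineK; last by apply: opnorm_fin; case: bD.
  by apply: opnorm_le => h' hb'; rewrite lee_fin ltW // H0.
have P1 : 0 < P + 1 by rewrite ltr_wpDl.
rewrite mulrAC -mulrA gtr_pMr // ltr_pdivrMr // mul1r ltrDl ltr01 //.
Qed.

Definition Dl j x h := lim ((fun g => hd g j x h) @ F).

Lemma Dl_cvg j x h : le_extnat j k -> U x -> (fun g => hd g j x h) @ F --> Dl j x h.
Proof. exact: Dcvg. Qed.

Lemma UC K j e : compact K -> K `<=` U -> le_extnat j k -> 0 < e ->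
  F [set g | CkW U k W g /\ forall x, K x -> forall h, inball j h ->
     `|hd g j x h - Dl j x h| <= e].
Proof.
move=> cK KU jk e0; have [A FA HA] := UCauchy cK KU jk e0.
apply: (@filterS _ _ _ A) => // g Ag; have [Cg _] := HA g g Ag Ag.
split => // x Kx h hb.
have Hn : \forall g2 \near F, `|hd g j x h - hd g2 j x h| <= e.
  apply: (@filterS _ _ _ A) => // g2 Ag2; exact/ltW/(HA g g2 Ag Ag2).2.
exact: (lim_le_near (Dl_cvg jk (KU _ Kx)) Hn).
Qed.

Lemma W_bound f j e : W f -> le_extnat j k -> 0 < e ->
  F [set g | CkW U k W g /\ forall x, U x -> forall h, inball j h ->
     (`|f x| * (`|hd g j x h - Dl j x h|)%:E <= e%:E)%E].
Proof.
move=> Wf jk e0; have [A0 FA0 HA0] := HC Wf jk e0.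
apply: (@filterS _ _ _ (A0 `&` CkW U k W)); last exact: filterI.
move=> g [Ag Cg]; split => // x Ux h hb.
apply: (lim_le_weight _ (Dl_cvg jk Ux)); first exact: abse_ge0.
apply: (@filterS _ _ _ (A0 `&` CkW U k W)); last exact: filterI.
move=> g2 [Ag2 Cg2]; apply: le_trans (sem_bound f Cg.1 Cg2.1 jk Ux hb) _.
exact/ltW/HA0.
Qed.

Lemma Dl_bml j x : le_extnat j k -> U x -> bounded_multilinear j (Dl j x).
Proof.
move=> jk Ux; split.
- move=> h h' hh; apply: (lim_eq_near (Dl_cvg jk Ux) (Dl_cvg jk Ux)).
  by apply: (@filterS _ _ _ _ _ _ FC) => g Cg; have [+ _ _] := hd_bml Cg.1 jk Ux; apply.
- move=> i ij h a u v.
  apply: (lim_lin (Dl_cvg jk Ux) (Dl_cvg jk Ux) (Dl_cvg jk Ux)).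
  by apply: (@filterS _ _ _ _ _ _ FC) => g Cg; have [_ + _] := hd_bml Cg.1 jk Ux; apply.
- have [g [Cg Hg]] := filter_ex (UC (@compact_set1 X x)
     (set1_subU Ux) jk ltr01).
  apply: (@le_lt_trans _ _ (fine (opnorm j (hd g j x)) + 1)%:E); last exact: ltry.
  apply: opnorm_le => h hb; rewrite lee_fin.
  have -> : Dl j x h = hd g j x h - (hd g j x h - Dl j x h) by rewrite opprB addrC subrK.
  apply: le_trans (ler_normB _ _) _; apply: lerD; last exact: Hg.
  by apply: opnorm_bound => //; have [_ _ ] := hd_bml Cg.1 jk Ux.
Qed.

Lemma Dl_cont j x : le_extnat j k -> U x -> forall e : R, 0 < e ->
  exists2 d : R, 0 < d & forall y, U y -> `|y - x| < d ->
    (opnorm j (fun h => (Dl j y h - Dl j x h)%R) <= e%:E)%E.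
Proof.
move=> jk Ux e e0; apply: NNPP => Hn.
have Hy : forall n : nat, exists y, U y /\ `|y - x| < n.+1%:R^-1 /\
    ~ (opnorm j (fun h => (Dl j y h - Dl j x h)%R) <= e%:E)%E.
  move=> n; apply: NNPP => Hn'; apply: Hn; exists n.+1%:R^-1; first by rewrite invr_gt0.
  move=> y Uy yd; apply: NNPP => Hc; apply: Hn'; by exists y.
have [yy Hyy] := boolp.choice Hy.
pose K := x |` range yy.
have cK : compact K.
  by apply: seq_compact => n; rewrite distrC; case: (Hyy n) => _ [].
have KU : K `<=` U by move=> z [->|[n _ <-]] //; case: (Hyy n).
have e3 : 0 < e / 3 by rewrite divr_gt0.
have [g [Cg Hg]] := filter_ex (UC cK KU jk e3).
have [_ _ _ c4] := hder_spec Cg.1.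
have [d0 d00 Hd0] := c4 j x jk Ux _ e3.
have [N _ HN] := near_infty_natSinv_lt (PosNum d00).
have [Un [yn Hc]] := Hyy N; apply: Hc.
have Kx : K x by left.
have Kyn : K (yy N) by right; exists N.
have H3 := Hd0 (yy N) Un (lt_trans yn (HN N (leqnn N))).
apply: opnorm_le => h hb; rewrite lee_fin.
have H3' := le_trans (opnorm_ub _ hb) H3; rewrite lee_fin in H3'.
rewrite (tri (hd g j (yy N) h) (hd g j x h)).
apply: le_trans (ler_normD _ _) _.
rewrite [leRHS](_ : e = e / 3 + e / 3 + e / 3); last by field.
apply: lerD; last exact: Hg.
apply: le_trans (ler_normB _ _) _; apply: lerD => //; exact: Hg.
Qed.

Lemma Dl_diff j x : le_extnat j.+1 k -> U x -> forall e : R, 0 < e ->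
  exists2 d : R, 0 < d & forall y, U y -> `|y - x| < d ->
    (opnorm j (fun h => (Dl j y h - Dl j x h - Dl j.+1 x (consv (y - x) h))%R)
      <= (e * `|y - x|)%:E)%E.
Proof.
move=> jk1 Ux e e0; have jk := le_extnatS jk1.
have [d1 d10 H1] := Dl_cont jk1 Ux e0.
have [r0 r00 rU] : exists2 r, 0 < r & ball x r `<=` U.
  by move: Uo; rewrite openE => /(_ x Ux) /nbhs_ballP.
exists (Num.min r0 d1); first by rewrite lt_min r00 d10.
move=> y Uy; rewrite lt_min => /andP[yr yd].
apply: opnorm_le => h hb; rewrite lee_fin.
set v := y - x; set w := `|v|.
have w0 : 0 <= w by exact: normr_ge0.
pose z t := x + t *: v.
have zU : forall t, 0 <= t <= 1 -> U (z t) /\ `|z t - x| < d1.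
  move=> t /andP[t0 t1]; have ztx : `|z t - x| <= w.
    by rewrite /z addrAC subrr add0r normrZ ger0_norm // ler_piMl.
  split; last exact: le_lt_trans ztx yd.
  by apply: rU; rewrite -ball_normE /= distrC; apply: le_lt_trans ztx yr.
pose Kseg := z @` `[0, 1].
have cK : compact Kseg.
  apply: continuous_compact; last exact: segment_compact.
  apply: continuous_subspaceT => t.
  apply: cvgD; [exact: cvg_cst | exact: scalel_continuous].
have KU : Kseg `<=` U.
  by move=> _ [t t01 <-]; apply: (zU t _).1; move: t01; rewrite /= in_itv.
have Kz : forall t, 0 <= t <= 1 -> Kseg (z t).
  by move=> t t01; exists t => //; rewrite /= in_itv.
apply/ler_addgt0Pr => eta eta0.
pose e1 := eta / (3 * (1 + w)).
have e10 : 0 < e1 by rewrite divr_gt0 // mulr_gt0 // ltr_pwDl.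
have [g [[Cg Hg0] [_ Hg1]]] := filter_ex (filterI (UC cK KU jk e10) (UC cK KU jk1 e10)).
pose c := Dl j.+1 x (consv v h).
pose phi t := hd g j (z t) h - t *: c.
pose M := (e1 + e) * w.
have Mb : forall t, 0 <= t <= 1 -> `|hd g j.+1 (z t) (consv v h) - c| <= M.
  move=> t t01; have [Uz zd] := zU t t01.
  have -> : hd g j.+1 (z t) (consv v h) - c =
     (hd g j.+1 (z t) (consv v h) - Dl j.+1 (z t) (consv v h)) +
     (Dl j.+1 (z t) (consv v h) - c) by rewrite addrA subrK.
  apply: le_trans (ler_normD _ _) _; rewrite /M mulrDl; apply: lerD.
  - exact: (consv_bound v (bml_sub (hd_bml Cg.1 jk1 Uz) (Dl_bml jk1 Uz))
      (fun h' hb' => Hg1 _ (Kz t t01) h' hb') hb).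
  - have HH : forall h', inball j.+1 h' ->
      `|Dl j.+1 (z t) h' - Dl j.+1 x h'| <= e.
      by move=> h' hb'; have := le_trans (opnorm_ub _ hb') (H1 _ Uz zd); rewrite lee_fin.
    exact: (consv_bound v (bml_sub (Dl_bml jk1 Uz) (Dl_bml jk1 Ux)) HH hb).
have mv : `|phi 1 - phi 0| <= M.
  apply: mvi => t t01 eps eps0.
  have [Uz zd] := zU t t01.
  have [_ _ c3 _] := hder_spec Cg.1.
  have w1 : 0 < w + 1 by rewrite ltr_wpDl.
  have eps'0 : 0 < eps / (w + 1) by rewrite divr_gt0.
  have [d' d'0 Hd'] := c3 j (z t) jk1 Uz _ eps'0.
  exists (d' / (w + 1)); first by rewrite divr_gt0.
  move=> s s01 std; have [Us _] := zU s s01.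
  have zsz : z s - z t = (s - t) *: v.
    by rewrite /z opprD addrACA subrr add0r scalerBl.
  have stw : `|s - t| * w <= `|s - t| * (w + 1) by rewrite ler_wpM2l // lerDl.
  have zsd : `|z s - z t| < d'.
    rewrite zsz normrZ; apply: le_lt_trans stw _.
    by rewrite -ltr_pdivlMr.
  have K := le_trans (opnorm_ub _ hb) (Hd' (z s) Us zsd); rewrite lee_fin in K.
  rewrite /phi (phi_id _ _ (hd g j.+1 (z t) (consv v h))).
  apply: le_trans (ler_normD _ _) _.
  rewrite normrZ mulrDl [_ * `|s - t|]mulrC addrC; apply: lerD; first exact: ler_wpM2l (Mb t t01).
  move: K; rewrite zsz (bml_consvZ _ _ _ (hd_bml Cg.1 jk1 Uz)) => /le_trans; apply.
  rewrite normrZ mulrCA mulrC ler_wpM2r //.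
  rewrite mulrAC ler_pdivrMr // ler_pM2l // lerDl ler01 //.
have zy : z 1 = y by rewrite /z scale1r /v addrC subrK.
have zx : z 0 = x by rewrite /z scale0r addr0.
have p1 : phi 1 = hd g j y h - c by rewrite /phi zy scale1r.
have p0 : phi 0 = hd g j x h by rewrite /phi zx scale0r subr0.
have Ky : Kseg y by rewrite -zy; apply: Kz; rewrite ler01 lexx.
have Kx : Kseg x by rewrite -zx; apply: Kz; rewrite lexx ler01.
rewrite (tri2 (hd g j y h) (hd g j x h)) -p1 -p0.
apply: le_trans (ler_normD _ _) _.
apply: le_trans (lerD (ler_normB _ _) (lexx _)) _.
have Hx := Hg0 _ Kx h hb; rewrite -p0 in Hx.
apply: le_trans (lerD (lerD mv (Hg0 _ Ky h hb)) Hx) _.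
have Heta : eta = e1 * (3 * (1 + w)) by rewrite /e1; field; rewrite gt_eqF // ltr_pwDl.
rewrite /M Heta; nra.
Qed.

Definition glim x := Dl 0 x (fun _ => 0).

Lemma le_extnat0 : le_extnat 0 k. Proof. by case: k. Qed.

Lemma glim_ihd : is_higher_derivs U k glim Dl.
Proof.
split.
- move=> x h Ux; rewrite /glim.
  apply: (lim_eq_near (Dl_cvg le_extnat0 Ux) (Dl_cvg le_extnat0 Ux)).
  apply: (@filterS _ _ _ _ _ _ FC) => g Cg.
  by have [c1 _ _ _] := hder_spec Cg.1; rewrite !c1.
- by move=> j x jk Ux; exact: Dl_bml.
- by move=> j x jk Ux; exact: Dl_diff.
- by move=> j x jk Ux; exact: Dl_cont.
Qed.

Lemma glim_Ck : CkW U k W glim.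
Proof.
have Cglim : isCk U k glim by exists Dl; exact: glim_ihd.
split => // f j Wf jk.
have [g [Cg Hg]] := filter_ex (W_bound Wf jk ltr01).
have hdE : forall x, U x -> hd glim j x = Dl j x.
  move=> x Ux; apply/funext => h.
  exact: (ihd_uniq Uo (hder_spec Cglim) glim_ihd jk Ux).
apply: (@le_lt_trans _ _ (wseminorm U k f j g + 1%:E)%E); last first.
  by apply: lte_add_pinfty; [exact: Cg.2 | exact: ltry].
apply/ereal_supP => _ [x Ux <-]; rewrite hdE //.
apply: opnorm_weight; first exact: abse_ge0.
move=> h hb.
have H1 : ((`|Dl j x h|)%:E <= (`|hd g j x h|)%:E + (`|hd g j x h - Dl j x h|)%:E)%E.
  rewrite -EFinD lee_fin.
  have E : Dl j x h = hd g j x h - (hd g j x h - Dl j x h) by rewrite opprB addrC subrK.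
  by rewrite {1}E; exact: ler_normB.
apply: le_trans (lee_wpmul2l (abse_ge0 _) H1) _.
rewrite ge0_muleDr ?lee_fin //; apply: leeD; last exact: Hg.
apply: le_trans (ereal_sup_ubound _); last by exists x.
by apply: lee_wpmul2l; [exact: abse_ge0 | exact: opnorm_ub].
Qed.

Lemma main_conv : exists2 g, CkW U k W g &
      forall f j (e : R), W f -> le_extnat j k -> 0 < e ->
        F [set g' | (wseminorm U k f j (fun x => (g' x - g x)%R) < e%:E)%E].
Proof.
exists glim; first exact: glim_Ck.
move=> f j e Wf jk e0; have e2 : 0 < e / 2 by rewrite divr_gt0.
apply: (@filterS _ _ _ _ _ _ (W_bound Wf jk e2)) => g [Cg Hg].
apply: (@le_lt_trans _ _ (e / 2)%:E); last first.
  by rewrite lte_fin ltr_pdivrMr // ltr_pMr // ltr1n.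
apply/ereal_supP => _ [x Ux <-].
have -> : hd (fun x => g x - glim x) j x = fun h => hd g j x h - Dl j x h.
  by apply/funext => h; exact: (hder_sub Cg.1 glim_ihd h jk Ux).
exact: opnorm_weight (abse_ge0 _) (Hg x Ux).
Qed.

End Main.

Unset Implicit Arguments.

Theorem mainTheorem13 (R : realType) (X : normedModType R)
    (Y : completeNormedModType R) (U : set X) (k : extnat)
    (W : set (X -> \bar R)) :
  open U -> U !=set0 ->
  (forall K : set X, compact K -> K `<=` U ->
     exists2 fK, W fK & (0 < ereal_inf [set `|fK x|%E | x in K])%E) ->
  @CkW_complete R X Y U k W.
Proof.
move=> Uo _ hW F PF FC HC.
exact: (main_conv Uo hW PF FC HC).
Qed.
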